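(* Let $\Delta$ be a simplicial polytopal fan in $\mathbb{R}^d$ with ray generators $\mathbf{v}_1,\ldots,\mathbf{v}_n$ and let $m\ge1$. Let $\Delta^m$ be the polyhedral fan in $\mathbb{R}^{m\times d}$ whose cells are the products $\sigma_1\times\cdots\times\sigma_m$ with $\sigma_j\in\Delta$ (the $j$-th factor constraining the $j$-th row). Let $\Upsilon$ be the collection of all closed cones $\overline{U_G}$, $G\in\mathcal{G}$, such that $G$ has no matching of size $n$. Then $\Upsilon$ is a polyhedral subcomplex of $\Delta^m$.
   Context: A fan is simplicial if every cone is generated by linearly independent vectors; polytopal if it is the normal fan of a polytope. For $\mathbf{u}\in\mathbb{R}^d$, with $\sigma$ the cone of $\Delta$ containing $\mathbf{u}$ in its relative interior and $\mathbf{u}=\sum_{k\in I_\sigma}\lambda_k\mathbf{v}_k$ over the generators of $\sigma$, set $[\mathbf{u}]_i=\lambda_i$ for $i\in I_\sigma$ and $0$ otherwise. For $U\in\mathbb{R}^{m\times d}$ with rows $\mathbf{u}^{(1)},\ldots,\mathbf{u}^{(m)}$, $G_U$ is the bipartite graph on $[n]\sqcup[m]$ with $i\in[n]$ adjacent to $j\in[m]$ iff $[\mathbf{u}^{(j)}]_i>0$. $\mathcal{G}$ is the set of graphs of the form $G_U$, and for $G\in\mathcal{G}$, $U_G=\{U\in\mathbb{R}^{m\times d}\colon G_U=G\}$; one has $U_{G_U}=\operatorname{relint}\sigma(\mathbf{u}^{(1)})\times\cdots\times\operatorname{relint}\sigma(\mathbf{u}^{(m)})$, where $\sigma(\mathbf{u})$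 is the cone of $\Delta$ containing $\mathbf{u}$ in its relative interior, and the closures $\overline{U_G}$ are exactly the cells of $\Delta^m$. *)

(* Defs.v *)
From HB Require Import structures.
From mathcomp Require Import all_boot all_order all_algebra.
From mathcomp Require Import reals.
Set Implicit Arguments. Unset Strict Implicit. Unset Printing Implicit Defensive.
Import Order.TTheory GRing.Theory Num.Theory.
Local Open Scope ring_scope.

Section Defs.
Variables (R : realType) (d n : nat).
Implicit Types (v : 'I_n -> 'rV[R]_d) (Delta : {set {set 'I_n}}).

Definition dotr (u w : 'rV[R]_d) : R := \sum_(k < d) u 0 k * w 0 k.

Definition gcone v (S : {set 'I_n}) : 'rV[R]_d -> Prop :=
  fun u => exists lam : 'I_n -> R,
    (forall i, 0 <= lam i) /\ u = \sum_(i in S) lam i *: v i.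

(* relative interior of a convex set C (algebraic/core definition, which
   coincides with the relative interior for convex sets in R^d) *)
Definition relint (C : 'rV[R]_d -> Prop) : 'rV[R]_d -> Prop :=
  fun x => C x /\ forall y, C y -> exists e : R, 0 < e /\ C (x + e *: (x - y)).

Definition simplicial_fan v Delta : Prop :=
  (forall S : {set 'I_n}, S \in Delta -> forall lam : 'I_n -> R,
      \sum_(i in S) lam i *: v i = 0 -> forall i, i \in S -> lam i = 0) /\
  (* closed under faces (faces of simplicial cones = subsets of generators) *)
  (forall S T : {set 'I_n}, S \in Delta -> T \subset S -> T \in Delta) /\
  (forall S T : {set 'I_n}, S \in Delta -> T \in Delta ->
      forall u, (gcone v S u /\ gcone v T u) <-> gcone v (S :&: T) u) /\
  (forall i, [set i] \in Delta).

(* normal cone of a nonempty subset A of the finite point set W of the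
   polytope conv(W): vectors u maximized (over conv W) on all of A *)
Definition normal_cone (W A : seq 'rV[R]_d) : 'rV[R]_d -> Prop :=
  fun u => forall a w, a \in A -> w \in W -> dotr u w <= dotr u a.

(* Delta is the normal fan of the polytope conv(W) for some finite W *)
Definition polytopal v Delta : Prop :=
  exists W : seq 'rV[R]_d,
    (forall S : {set 'I_n}, S \in Delta -> exists A : seq 'rV[R]_d,
        A != [::] /\ {subset A <= W} /\
        forall u, gcone v S u <-> normal_cone W A u) /\
    (forall A : seq 'rV[R]_d, A != [::] -> {subset A <= W} ->
        exists S : {set 'I_n}, S \in Delta /\ forall u, gcone v S u <-> normal_cone W A u).

(* [u]_i > 0 : with sigma the cone of Delta containing u in its relative
   interior and u = sum_{k in I_sigma} lambda_k v_k, we have lambda_i > 0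
   (and i in I_sigma) *)
Definition coord_pos v Delta (u : 'rV[R]_d) (i : 'I_n) : Prop :=
  exists S : {set 'I_n}, S \in Delta /\ exists lam : 'I_n -> R,
    relint (gcone v S) u /\ u = \sum_(k in S) lam k *: v k /\
    i \in S /\ 0 < lam i.

Variable m : nat.

(* G_U = G : the bipartite graph G (edges (i,j), i in [n], j in [m]) is G_U *)
Definition graph_of v Delta (U : 'M[R]_(m, d)) (G : {set 'I_n * 'I_m}) : Prop :=
  forall i j, (i, j) \in G <-> coord_pos v Delta (row j U) i.

Definition in_calG v Delta (G : {set 'I_n * 'I_m}) : Prop :=
  exists U, graph_of v Delta U G.

Definition U_of v Delta (G : {set 'I_n * 'I_m}) : 'M[R]_(m, d) -> Prop :=
  fun U => graph_of v Delta U G.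

Definition has_matching (G : {set 'I_n * 'I_m}) (k : nat) : Prop :=
  exists M : {set 'I_n * 'I_m},
    M \subset G /\ #|M| = k /\
    {in M &, forall e f, e.1 = f.1 -> e = f} /\
    {in M &, forall e f, e.2 = f.2 -> e = f}.

Definition mclosure (A : 'M[R]_(m, d) -> Prop) : 'M[R]_(m, d) -> Prop :=
  fun X => forall e : R, 0 < e ->
    exists Y, A Y /\ forall i j, `|X i j - Y i j| < e.

Definition mdot (Y X : 'M[R]_(m, d)) : R := \sum_i \sum_j Y i j * X i j.

Definition seteq (A B : 'M[R]_(m, d) -> Prop) : Prop := forall X, A X <-> B X.

Definition cell_prod v Delta (C : 'M[R]_(m, d) -> Prop) : Prop :=
  exists S : 'I_m -> {set 'I_n}, (forall j, S j \in Delta) /\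
    seteq C (fun U => forall j, gcone v (S j) (row j U)).

Definition is_face (F C : 'M[R]_(m, d) -> Prop) : Prop :=
  exists Y : 'M[R]_(m, d), (forall X, C X -> 0 <= mdot Y X) /\
    seteq F (fun X => C X /\ mdot Y X = 0).

Definition Upsilon v Delta (C : 'M[R]_(m, d) -> Prop) : Prop :=
  exists G, in_calG v Delta G /\ ~ has_matching G n /\
    seteq C (mclosure (U_of v Delta G)).

Definition subcomplex v Delta (Y : ('M[R]_(m, d) -> Prop) -> Prop) : Prop :=
  (forall C, Y C -> cell_prod v Delta C) /\
  (forall C F, Y C -> is_face F C -> Y F).

End Defs.

(* Main.v *)
Require Import Defs.
From HB Require Import structures.
From mathcomp Require Import all_boot all_order all_algebra.
From mathcomp Require Import reals.
From mathcomp Require Import lra ring.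
Import Order.TTheory GRing.Theory Num.Theory.
Local Open Scope ring_scope.
Set Implicit Arguments. Unset Strict Implicit. Unset Printing Implicit Defensive.

Lemma sum_ge_term (R : realType) (I : finType) (P : pred I) (F : I -> R) i :
  P i -> (forall j, P j -> 0 <= F j) -> F i <= \sum_(j | P j) F j.
Proof.
move=> Pi F0; rewrite (bigD1 i) //= lerDl; apply: sumr_ge0 => j /andP [Pj _].
exact: F0.
Qed.

Lemma dotrC (R : realType) d (u w : 'rV[R]_d) : dotr u w = dotr w u.
Proof. by apply: eq_bigr => k _; rewrite mulrC. Qed.

Lemma dotrDr (R : realType) d (u a b : 'rV[R]_d) : dotr u (a + b) = dotr u a + dotr u b.
Proof. by rewrite /dotr -big_split /=; apply: eq_bigr => k _; rewrite mxE mulrDr. Qed.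

Lemma dotrBr (R : realType) d (u a b : 'rV[R]_d) : dotr u (a - b) = dotr u a - dotr u b.
Proof. by rewrite /dotr -sumrB /=; apply: eq_bigr => k _; rewrite !mxE mulrBr. Qed.

Lemma dotrZr (R : realType) d (u a : 'rV[R]_d) c : dotr u (c *: a) = c * dotr u a.
Proof. by rewrite /dotr mulr_sumr; apply: eq_bigr => k _; rewrite mxE mulrCA. Qed.

Lemma dotr0r (R : realType) d (u : 'rV[R]_d) : dotr u 0 = 0.
Proof. by rewrite /dotr big1 // => k _; rewrite mxE mulr0. Qed.

Lemma dotr_sumr (R : realType) d (u : 'rV[R]_d) (I : finType) (P : pred I) (F : I -> 'rV[R]_d) :
  dotr u (\sum_(i | P i) F i) = \sum_(i | P i) dotr u (F i).
Proof. exact: (big_morph _ (dotrDr u) (dotr0r u)). Qed.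

Lemma dotr_bound (R : realType) d (z r : 'rV[R]_d) e :
  (forall l, `|r 0 l| <= e) -> dotr z r <= e * \sum_l `|z 0 l|.
Proof.
move=> hr; rewrite /dotr mulr_sumr; apply: ler_sum => l _.
apply: le_trans (ler_norm _) _; rewrite normrM mulrC.
by apply: ler_wpM2r => //.
Qed.

Lemma comb_sub_ext (R : realType) d n (v : 'I_n -> 'rV[R]_d) (T S : {set 'I_n}) (a : 'I_n -> R) :
  T \subset S -> \sum_(k in T) a k *: v k = \sum_(k in S) (if k \in T then a k else 0) *: v k.
Proof.
move=> TS; rewrite [RHS](big_setID T) /= (setIidPr TS) [X in _ = _ + X]big1 ?addr0.
  by apply: eq_bigr => k ->.
by move=> k; rewrite inE => /andP [/negbTE -> _]; rewrite scale0r.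
Qed.

Lemma gcone_sub (R : realType) d n (v : 'I_n -> 'rV[R]_d) (T S : {set 'I_n}) u :
  T \subset S -> gcone v T u -> gcone v S u.
Proof.
move=> TS [lam [lam0 ->]]; exists (fun k => if k \in T then lam k else 0); split.
  by move=> k; case: ifP.
exact: comb_sub_ext.
Qed.

Lemma indep_eq (R : realType) d n (v : 'I_n -> 'rV[R]_d) Delta S (a b : 'I_n -> R) :
  simplicial_fan v Delta -> S \in Delta ->
  \sum_(k in S) a k *: v k = \sum_(k in S) b k *: v k -> forall k, k \in S -> a k = b k.
Proof.
move=> [hi _] SD hab k kS; apply/eqP; rewrite -subr_eq0; apply/eqP.
apply: (hi S SD (fun k => a k - b k)) => //.
rewrite (eq_bigr (fun k => a k *: v k - b k *: v k)); last by move=> i _; rewrite scalerBl.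
by rewrite sumrB hab subrr.
Qed.

Lemma relint_pos (R : realType) d n (v : 'I_n -> 'rV[R]_d) Delta S u :
  simplicial_fan v Delta -> S \in Delta -> relint (gcone v S) u ->
  exists lam : 'I_n -> R, (forall k, k \in S -> 0 < lam k) /\ u = \sum_(k in S) lam k *: v k.
Proof.
move=> hf SD [[lam [lam0 ->]] hr].
have [e [e0 [mu [mu0 hmu]]]] := hr (\sum_(k in S) (fun _ => 1) k *: v k)
  (ex_intro _ (fun _ => 1) (conj (fun _ => ler01) erefl)).
exists lam; split => // k kS.
have : lam k + e * (lam k - 1) = mu k.
  apply: (indep_eq (a := fun k => lam k + e * (lam k - 1)) hf SD _ kS).
  rewrite -hmu -sumrB scaler_sumr -big_split /=; apply: eq_bigr => i _.
  by rewrite -scalerBl scalerA -scalerDl.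
move=> h; have := mu0 k; nra.
Qed.

Lemma pos_relint (R : realType) d n (v : 'I_n -> 'rV[R]_d) (S : {set 'I_n}) (lam : 'I_n -> R) :
  (forall k, k \in S -> 0 < lam k) -> relint (gcone v S) (\sum_(k in S) lam k *: v k).
Proof.
move=> hpos; split.
  exists (fun k => if k \in S then lam k else 0); split.
    by move=> k; case: ifP => // /hpos /ltW.
  by apply: eq_bigr => k ->.
move=> y [mu [mu0 ->]].
set K := \sum_(k in S) mu k / lam k.
have K0 : 0 <= K by apply: sumr_ge0 => k kS; apply: divr_ge0 => //; apply: ltW; apply: hpos.
have K1 : 0 < 1 + K by lra.
set e := (1 + K)^-1.
have e0 : 0 < e by rewrite invr_gt0.
exists e; split => //.
exists (fun k => if k \in S then lam k + e * (lam k - mu k) else 0); split.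
  move=> k; case: ifP => kS //.
  have lk := hpos k kS.
  have hmu : mu k <= K * lam k.
    rewrite -ler_pdivrMr //; apply: (sum_ge_term (P := mem S) (F := fun k => mu k / lam k)) => //.
    by move=> j jS; apply: divr_ge0 => //; apply: ltW; apply: hpos.
  have h1 : e * mu k <= e * (K * lam k) by apply: ler_wpM2l => //; apply: ltW.
  have h2 : e * (K * lam k) = lam k - e * lam k.
    rewrite /e; field; lra.
  have := mu0 k; nra.
rewrite -sumrB scaler_sumr -big_split /=; apply: eq_bigr => k kS.
by rewrite kS -scalerBl scalerA -scalerDl.
Qed.

Lemma uniq_cone (R : realType) d n (v : 'I_n -> 'rV[R]_d) Delta S T u :
  simplicial_fan v Delta -> S \in Delta -> T \in Delta ->
  relint (gcone v S) u -> gcone v T u -> S \subset T.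
Proof.
move=> hf SD TD hS hT.
have [lam [lpos hu]] := relint_pos hf SD hS.
have [nu [nu0 hnu]] := (hf.2.2.1 S T SD TD u).1 (conj hS.1 hT).
rewrite hu (comb_sub_ext v nu (subsetIl S T)) in hnu.
apply/subsetP => k kS.
have := indep_eq hf SD hnu kS; rewrite inE kS /=.
case: (k \in T) => // h; have := lpos k kS; by rewrite h ltxx.
Qed.

Lemma coord_pos_char (R : realType) d n (v : 'I_n -> 'rV[R]_d) Delta T u i :
  simplicial_fan v Delta -> T \in Delta -> relint (gcone v T) u ->
  coord_pos v Delta u i <-> i \in T.
Proof.
move=> hf TD hT; split.
  move=> [S [SD [lam [hS [_ [iS _]]]]]].
  exact: (subsetP (uniq_cone hf SD TD hS hT.1)) i iS.
move=> iT; have [lam [lpos hu]] := relint_pos hf TD hT.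
exists T; split => //; exists lam; split => //; split => //; split => //.
exact: lpos.
Qed.

Lemma argmax_seq (R : realType) (T : eqType) (f : T -> R) (W : seq T) x :
  x \in W -> exists a, a \in W /\ forall w, w \in W -> f w <= f a.
Proof.
elim: W x => // y W IH x _.
case hW: W => [|z W'].
  by exists y; split; rewrite ?mem_head // => w; rewrite inE => /eqP ->.
have zW : z \in W by rewrite hW mem_head.
have [a [aW ha]] := IH z zW.
rewrite -hW; case: (leP (f y) (f a)) => hya.
  exists a; split; first by rewrite inE aW orbT.
  by move=> w; rewrite inE => /orP [/eqP ->|/ha].
exists y; split; first by rewrite mem_head.
move=> w; rewrite inE => /orP [/eqP ->//|/ha h]; exact: le_trans h (ltW hya).
Qed.

Lemma complete_cone (R : realType) d n (v : 'I_n -> 'rV[R]_d) Delta (i0 : 'I_n) :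
  simplicial_fan v Delta -> polytopal v Delta ->
  forall u, exists S, S \in Delta /\ gcone v S u.
Proof.
move=> hf [W [h1 h2]] u.
have [A [An0 [AW _]]] := h1 _ (hf.2.2.2 i0).
case: A An0 AW => // a0 A _ AW.
have [a [aW ha]] := argmax_seq (dotr u) (AW a0 (mem_head _ _)).
have sub : {subset [:: a] <= W} by move=> x; rewrite inE => /eqP ->.
have [S [SD hS]] := h2 [:: a] isT sub.
exists S; split => //; apply/(hS u).2.
by move=> a' w; rewrite inE => /eqP -> wW; apply: ha.
Qed.

Lemma complete_relint (R : realType) d n (v : 'I_n -> 'rV[R]_d) Delta (i0 : 'I_n) :
  simplicial_fan v Delta -> polytopal v Delta ->
  forall u, exists T, T \in Delta /\ relint (gcone v T) u.
Proof.
move=> hf hp u.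
have [S [SD [lam [lam0 hu]]]] := complete_cone i0 hf hp u.
set T := [set k in S | 0 < lam k].
have TS : T \subset S by apply/subsetP => k; rewrite inE => /andP [].
exists T; split; first exact: (hf.2.1 S T SD TS).
have -> : u = \sum_(k in T) lam k *: v k.
  rewrite hu (comb_sub_ext v lam TS); apply: eq_bigr => k kS.
  rewrite inE kS /=; case: ifP => // /negbT; rewrite -leNgt => h.
  have -> : lam k = 0 by apply/eqP; rewrite eq_le h lam0.
  by [].
by apply: pos_relint => k; rewrite inE => /andP [].
Qed.

Lemma graph_char (R : realType) d n m (v : 'I_n -> 'rV[R]_d) Delta (i0 : 'I_n)
  (Sj : 'I_m -> {set 'I_n}) (G : {set 'I_n * 'I_m}) :
  simplicial_fan v Delta -> polytopal v Delta -> (forall j, Sj j \in Delta) ->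
  (forall i j, (i, j) \in G <-> i \in Sj j) ->
  forall X, U_of v Delta G X <-> forall j, relint (gcone v (Sj j)) (row j X).
Proof.
move=> hf hp SD hG X; split.
  move=> hX j.
  have [T [TD hT]] := complete_relint i0 hf hp (row j X).
  suff -> : Sj j = T by [].
  apply/setP => i; apply/idP/idP => h.
    by apply/(coord_pos_char i hf TD hT); apply/(hX i j); apply/(hG i j).
  by apply/(hG i j); apply/(hX i j); apply/(coord_pos_char i hf TD hT).
move=> hr i j; split => h.
  by apply/(coord_pos_char i hf (SD j) (hr j)); apply/(hG i j).
by apply/(hG i j); apply/(coord_pos_char i hf (SD j) (hr j)).
Qed.

Lemma calG_char (R : realType) d n m (v : 'I_n -> 'rV[R]_d) Delta (i0 : 'I_n)
  (G : {set 'I_n * 'I_m}) :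
  simplicial_fan v Delta -> polytopal v Delta -> in_calG v Delta G ->
  forall j, [set i | (i, j) \in G] \in Delta.
Proof.
move=> hf hp [U hU] j.
have [T [TD hT]] := complete_relint i0 hf hp (row j U).
suff -> : [set i | (i, j) \in G] = T by [].
apply/setP => i; rewrite inE; apply/idP/idP => h.
  by apply/(coord_pos_char i hf TD hT); apply/(hU i j).
by apply/(hU i j); apply/(coord_pos_char i hf TD hT).
Qed.

Lemma calG_of (R : realType) d n m (v : 'I_n -> 'rV[R]_d) Delta (i0 : 'I_n)
  (Tj : 'I_m -> {set 'I_n}) :
  simplicial_fan v Delta -> polytopal v Delta -> (forall j, Tj j \in Delta) ->
  in_calG v Delta [set ij | ij.1 \in Tj ij.2].
Proof.
move=> hf hp TD.
exists (\matrix_j (\sum_(k in Tj j) (fun _ => 1) k *: v k)).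
apply/(graph_char i0 hf hp TD); first by move=> i j; rewrite inE.
move=> j; rewrite rowK; apply: pos_relint => k _; exact: ltr01.
Qed.

Lemma mclosure_ext (R : realType) d m (A B : 'M[R]_(m, d) -> Prop) :
  (forall X, A X <-> B X) -> forall X, mclosure A X <-> mclosure B X.
Proof.
move=> hAB X; split => h e e0; have [Y [hY hXY]] := h e e0; exists Y; split => //;
  exact/hAB.
Qed.

Lemma closure_char (R : realType) d n m (v : 'I_n -> 'rV[R]_d) Delta
  (Sj : 'I_m -> {set 'I_n}) :
  simplicial_fan v Delta -> polytopal v Delta -> (forall j, Sj j \in Delta) ->
  forall X, mclosure (fun X => forall j, relint (gcone v (Sj j)) (row j X)) X <->
            forall j, gcone v (Sj j) (row j X).
Proof.
move=> hf hp SD X; split.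
  move=> hc j.
  have [W [h1 _]] := hp.
  have [A [_ [_ hA]]] := h1 _ (SD j).
  apply/(hA _).2 => a w aA wW; rewrite leNgt; apply/negP => hlt.
  set z := w - a.
  set K := \sum_l `|z 0 l|.
  have K0 : 0 <= K by apply: sumr_ge0 => l _.
  set del := dotr z (row j X).
  have del0 : 0 < del by rewrite /del /z dotrC dotrBr subr_gt0.
  set e := del / (1 + K).
  have e0 : 0 < e by apply: divr_gt0 => //; lra.
  have [Y [hY hXY]] := hc e e0.
  have hy := (hA _).1 (hY j).1 a w aA wW.
  have hy' : dotr z (row j Y) <= 0 by rewrite /z dotrC dotrBr subr_le0.
  have hb : dotr z (row j X - row j Y) <= e * K.
    apply: dotr_bound => l; rewrite !mxE; exact: ltW.
  rewrite dotrBr -/del in hb.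
  have heK : e * K < del.
    rewrite /e mulrAC ltr_pdivrMr; last by lra.
    nra.
  lra.
move=> hX e e0.
set M : 'M[R]_(m, d) := \matrix_j (\sum_(k in Sj j) v k).
set K := \sum_i \sum_l `|M i l|.
have K0 : 0 <= K by apply: sumr_ge0 => i _; apply: sumr_ge0.
set t := e / (1 + K).
have t0 : 0 < t by apply: divr_gt0 => //; lra.
exists (X + t *: M); split.
  move=> j; rewrite linearD linearZ /= rowK.
  have [lam [lam0 ->]] := hX j.
  have -> : \sum_(k in Sj j) lam k *: v k + t *: \sum_(k in Sj j) v k =
            \sum_(k in Sj j) (fun k => lam k + t) k *: v k.
    by rewrite scaler_sumr -big_split /=; apply: eq_bigr => k _; rewrite scalerDl.
  apply: pos_relint => k _ /=; have := lam0 k; lra.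
move=> i l; rewrite !mxE opprD addrA subrr add0r normrN normrM (gtr0_norm t0).
have hM : `|M i l| <= K.
  apply: le_trans (sum_ge_term (P := predT) (F := fun i => \sum_l `|M i l|) (i := i) _ _) => //.
  by apply: (sum_ge_term (P := predT) (F := fun l => `|M i l|)).
  by move=> *; apply: sumr_ge0.
have h1 : t * `|M i l| <= t * K by apply: ler_wpM2l => //; apply: ltW.
have h2 : t * K < e.
  rewrite /t mulrAC ltr_pdivrMr; last by lra.
  nra.
have hMe : M i l = (\sum_(k in Sj i) v k) 0 l by rewrite /M mxE.
rewrite -hMe; lra.
Qed.

Lemma face_row (R : realType) d n (v : 'I_n -> 'rV[R]_d) (S : {set 'I_n}) (y x : 'rV[R]_d) :
  (forall k, k \in S -> 0 <= dotr y (v k)) -> gcone v S x ->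
  0 <= dotr y x /\ (dotr y x = 0 <-> gcone v [set k in S | dotr y (v k) == 0] x).
Proof.
move=> hy [lam [lam0 hx]].
have hd : dotr y x = \sum_(k in S) lam k * dotr y (v k).
  by rewrite hx dotr_sumr; apply: eq_bigr => k _; rewrite dotrZr.
have hge : forall k, k \in S -> 0 <= lam k * dotr y (v k).
  by move=> k kS; apply: mulr_ge0 => //; apply: hy.
split; first by rewrite hd; apply: sumr_ge0.
set T := [set k in S | dotr y (v k) == 0].
have TS : T \subset S by apply/subsetP => k; rewrite inE => /andP [].
split.
  move=> h0; rewrite hd in h0.
  have h0' := psumr_eq0P hge h0.
  exists lam; split => //.
  rewrite hx (comb_sub_ext v lam TS); apply: eq_bigr => k kS.
  rewrite inE kS /=; case: ifP => // /negbT hne.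
  have := h0' k kS; move/eqP; rewrite mulf_eq0 (negbTE hne) orbF => /eqP ->.
  by [].
move=> [mu [mu0 ->]].
rewrite dotr_sumr big1 // => k; rewrite inE => /andP [_ /eqP h].
by rewrite dotrZr h mulr0.
Qed.

Lemma mdot_rows (R : realType) d m (Y X : 'M[R]_(m, d)) :
  mdot Y X = \sum_j dotr (row j Y) (row j X).
Proof. by apply: eq_bigr => i _; apply: eq_bigr => k _; rewrite !mxE. Qed.

Lemma gcone_gen (R : realType) d n (v : 'I_n -> 'rV[R]_d) (S : {set 'I_n}) k :
  k \in S -> gcone v S (v k).
Proof.
move=> kS; exists (fun k' => if k' == k then 1 else 0); split.
  by move=> k'; case: ifP.
rewrite (bigD1 k) //= eqxx scale1r big1 ?addr0 // => k' /andP [_ /negbTE ->].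
by rewrite scale0r.
Qed.

Lemma gcone0 (R : realType) d n (v : 'I_n -> 'rV[R]_d) (S : {set 'I_n}) :
  gcone v S 0.
Proof.
exists (fun _ => 0); split => //.
by rewrite big1 // => k _; rewrite scale0r.
Qed.

Lemma face_prod (R : realType) d n m (v : 'I_n -> 'rV[R]_d)
  (Sj : 'I_m -> {set 'I_n}) F :
  is_face F (fun X => forall j, gcone v (Sj j) (row j X)) ->
  exists Tj : 'I_m -> {set 'I_n}, (forall j, Tj j \subset Sj j) /\
    seteq F (fun X => forall j, gcone v (Tj j) (row j X)).
Proof.
move=> [Y [hY hF]].
have hgen : forall j k, k \in Sj j -> 0 <= dotr (row j Y) (v k).
  move=> j k kS.
  set X0 : 'M[R]_(m, d) := \matrix_i (if i == j then v k else 0).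
  have hX0 : forall i, row i X0 = if i == j then v k else 0 by move=> i; rewrite rowK.
  have := hY X0; rewrite mdot_rows (bigD1 j) //= big1.
    rewrite hX0 eqxx addr0; apply => i; rewrite hX0.
    by case: eqP => [->|_]; [exact: gcone_gen | exact: gcone0].
  by move=> i /negbTE hi; rewrite hX0 hi dotr0r.
exists (fun j => [set k in Sj j | dotr (row j Y) (v k) == 0]); split.
  by move=> j; apply/subsetP => k; rewrite inE => /andP [].
move=> X; rewrite hF; split.
  move=> [hC h0] j.
  rewrite mdot_rows in h0.
  have h0' := psumr_eq0P (fun j _ => (face_row (hgen j) (hC j)).1) h0.
  exact/((face_row (hgen j) (hC j)).2)/h0'.
move=> hT.
have hC : forall j, gcone v (Sj j) (row j X).
  move=> j; apply: gcone_sub (hT j).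
  by apply/subsetP => k; rewrite inE => /andP [].
split => //.
rewrite mdot_rows big1 // => j _.
exact/((face_row (hgen j) (hC j)).2).
Qed.

Lemma upsilon_cell (R : realType) d n m (v : 'I_n -> 'rV[R]_d) Delta (i0 : 'I_n)
  (G : {set 'I_n * 'I_m}) C :
  simplicial_fan v Delta -> polytopal v Delta -> in_calG v Delta G ->
  seteq C (mclosure (U_of v Delta G)) ->
  seteq C (fun X => forall j, gcone v [set i | (i, j) \in G] (row j X)).
Proof.
move=> hf hp hG hC X.
have SD := calG_char i0 hf hp hG.
rewrite hC (mclosure_ext (graph_char i0 hf hp SD _)); last by move=> i j; rewrite inE.
exact: (closure_char hf hp SD X).
Qed.

Unset Implicit Arguments.
Theorem lemma3p9 (R : realType) (d n m : nat) (v : 'I_n -> 'rV[R]_d)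
  (Delta : {set {set 'I_n}}) :
  simplicial_fan v Delta -> polytopal v Delta -> (0 < m)%N ->
  subcomplex v Delta (Upsilon (m := m) v Delta).
Proof.
move=> hf hp _.
case: (posnP n) => [hn0 | hn].
  have nm : forall G : {set 'I_n * 'I_m}, has_matching G n.
    move=> G; exists set0; split; first exact: sub0set.
    split; first by rewrite cards0 hn0.
    by split => e f; rewrite in_set0.
  by split => [C [G [_ [hm _]]] | C F [G [_ [hm _]]]]; case: hm; apply: nm.
pose i0 := Ordinal hn.
split.
  move=> C [G [hG [_ hC]]].
  exists (fun j => [set i | (i, j) \in G]); split.
    move=> j; exact: (calG_char i0 hf hp hG j).
  exact: (upsilon_cell i0 hf hp hG hC).
move=> C F [G [hG [hnm hC]]] [Y [hY hFe]].
have hC' := upsilon_cell i0 hf hp hG hC.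
have SD := calG_char i0 hf hp hG.
have hface : is_face F (fun X => forall j, gcone v [set i | (i, j) \in G] (row j X)).
  exists Y; split.
    by move=> X /hC' /hY.
  by move=> X; rewrite hFe hC'.
have [Tj [hTS hF]] := face_prod hface.
have TD : forall j, Tj j \in Delta by move=> j; exact: (hf.2.1 _ _ (SD j) (hTS j)).
exists [set ij | ij.1 \in Tj ij.2]; split.
  exact: (calG_of i0 hf hp TD).
split.
  move=> [M [MG rest]]; apply: hnm; exists M; split => //.
  apply: subset_trans MG _; apply/subsetP => -[i j]; rewrite !inE /= => h.
  by have := subsetP (hTS j) i h; rewrite inE.
move=> X; rewrite hF.
rewrite (mclosure_ext (graph_char i0 hf hp TD _)); last by move=> i j; rewrite inE.
exact: (iff_sym (closure_char hf hp TD X)).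
Qed.
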